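(* If $G$ is a chordal graph of treewidth $w$ and with a resolving set of size $k$, then $w\leq 3^k$.
   Context: A graph is chordal if it has no induced cycle of length at least $4$. A set $R$ of vertices of a graph $G$ is a resolving set if for each pair $u,v$ of distinct vertices there is $x\in R$ with $d(x,u)\neq d(x,v)$. *)

(* Defs.v *)
From mathcomp Require Import all_boot.
Set Implicit Arguments. Unset Strict Implicit. Unset Printing Implicit Defensive.

Section Graphs.
Variable V : finType.

Definition simple_graph (e : rel V) : Prop := symmetric e /\ irreflexive e.

Definition connected_graph (e : rel V) : Prop := forall x y : V, connect e x y.

Definition walkn (e : rel V) (n : nat) (x y : V) : bool :=
  [exists p : n.-tuple V, path e x p && (last x p == y)].

(* graph distance: least n such that a walk of length n exists from x to y
   (in a connected graph such an n is < #|V|; otherwise the value is #|V|) *)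
Definition dist (e : rel V) (x y : V) : nat :=
  find (fun n => walkn e n x y) (iota 0 #|V|).

Definition resolving (e : rel V) (R : {set V}) : Prop :=
  forall u v : V, u != v -> exists2 x, x \in R & dist e x u != dist e x v.

Definition induced_cycle (e : rel V) (s : seq V) : Prop :=
  [/\ uniq s, 4 <= size s, cycle e s &
      forall x y, x \in s -> y \in s -> e x y -> (y == next s x) || (x == next s y)].

Definition chordal (e : rel V) : Prop := forall s : seq V, ~ induced_cycle e s.
End Graphs.

Definition is_tree (n : nat) (t : rel 'I_n.+1) : Prop :=
  [/\ simple_graph t, connected_graph t &
      forall s : seq 'I_n.+1, ~ [/\ uniq s, 3 <= size s & cycle t s]].

Definition tree_decomposition (V : finType) (e : rel V)
  (n : nat) (t : rel 'I_n.+1) (B : 'I_n.+1 -> {set V}) : Prop :=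
  [/\ is_tree t,
      (forall v : V, exists i, v \in B i),
      (forall u v : V, e u v -> exists i, (u \in B i) && (v \in B i)) &
      forall (v : V) (i j : 'I_n.+1), v \in B i -> v \in B j ->
        connect [rel a b | t a b && (v \in B a) && (v \in B b)] i j].

Definition has_td_width (V : finType) (e : rel V) (w : nat) : Prop :=
  exists n (t : rel 'I_n.+1) (B : 'I_n.+1 -> {set V}),
    tree_decomposition e t B /\ (\max_(i < n.+1) #|B i| <= w.+1)%N.

Definition treewidth (V : finType) (e : rel V) (w : nat) : Prop :=
  has_td_width e w /\ forall w', has_td_width e w' -> w <= w'.

(* Main.v *)
Require Import Defs.
From mathcomp Require Import all_boot.
From mathcomp Require Import zify.
From Stdlib Require Import Classical.
Set Implicit Arguments. Unset Strict Implicit. Unset Printing Implicit Defensive.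

Section Chordal.
Variable V : finType.
Variable e : rel V.
Hypothesis esym : symmetric e.
Hypothesis eirr : irreflexive e.
Hypothesis ech : chordal e.

Definition goodf (a : V) (m : nat) (f : nat -> V) : Prop :=
  [/\ e a (f 0), e a (f m.+1), f 0 != f m.+1, ~~ e (f 0) (f m.+1) &
      ((forall i, i <= m -> e (f i) (f i.+1)) /\
      (forall i, 0 < i <= m -> (f i != a) && ~~ e a (f i)))].

Lemma goodf_shorten a m f i j : goodf a m f -> i < j <= m.+1 -> i.+1 < j ->
  e (f i) (f j) -> (i, j) != (0, m.+1) ->
  goodf a (m - (j - i.+1)) (fun k => if k <= i then f k else f (k + (j - i.+1))).
Proof.
move=> [h1 h2 h3 h4 [h5 h6]] /andP[hij hjm] hij2 hch hne.
have Hm : m - (j - i.+1) + (j - i.+1) = m by lia.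
have Hmi : ~~ ((m - (j - i.+1)).+1 <= i) by lia.
split => /=.
- exact: h1.
- by rewrite (negbTE Hmi) addSn Hm.
- by rewrite (negbTE Hmi) addSn Hm.
- by rewrite (negbTE Hmi) addSn Hm.
split.
- move=> k hk; case: (ltngtP k i) => hki.
  + apply: h5; lia.
  + have -> : k.+1 + (j - i.+1) = (k + (j - i.+1)).+1 by lia.
    apply: h5; lia.
  + subst k.
    by have -> : i.+1 + (j - i.+1) = j by lia.
- move=> k hk; case: ifP => hki.
  + apply: h6; lia.
  + apply: h6; lia.
Qed.

Lemma goodf_chordless a m f : goodf a m f ->
  (forall m' g, m' < m -> ~ goodf a m' g) ->
  forall i j, i < j <= m.+1 -> i.+1 < j -> ~~ e (f i) (f j).
Proof.
move=> G IH i j hij hij2; apply/negP => hch.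
have [hne|hne] := eqVneq (i, j) (0, m.+1).
  case: G => _ _ _ h4 _; case: hne => hi hj; subst; by rewrite hch in h4.
apply: (IH _ _ _ (goodf_shorten G hij hij2 hch hne)); lia.
Qed.

Lemma goodf_inj a m f : goodf a m f ->
  (forall m' g, m' < m -> ~ goodf a m' g) ->
  forall i j, i < j <= m.+1 -> f i != f j.
Proof.
move=> G IH i j hij; apply/negP => /eqP hfe.
have CL := goodf_chordless G IH.
case: G => h1 h2 h3 h4 [h5 h6].
have [hjm|hjm] := leqP j m.
- have H := CL i j.+1 ltac:(lia) ltac:(lia).
  by rewrite hfe h5 in H.
- have hj : j = m.+1 by lia.
  subst j.
  have [hi0|hi0] := posnP i.
    by subst i; move: h3; rewrite hfe eqxx.
  have H := CL i.-1 m.+1 ltac:(lia) ltac:(lia).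
  rewrite -hfe in H.
  have hi : f i = f (i.-1).+1 by rewrite prednK.
  by rewrite hi h5 in H; lia.
Qed.

Lemma no_goodf : forall m a f, ~ goodf a m f.
Proof.
move=> m; have [M] := ubnP m; elim: M m => // M IHM m hm a f G.
have IH : forall m' g, m' < m -> ~ goodf a m' g.
  move=> m' g hm'; apply: IHM; lia.
have CL := goodf_chordless G IH.
have INJ := goodf_inj G IH.
case: G => h1 h2 h3 h4 [h5 h6].
have m1 : 0 < m.
  case: (posnP m) => // m0; subst m; by rewrite h5 in h4.
have [L HL] : exists L, L = mkseq f m.+2 by eexists.
have memL : forall x, x \in L -> exists2 i, i < m.+2 & x = f i.
  move=> x; rewrite HL /mkseq => /mapP[i]; rewrite mem_iota => hi ->.
  by exists i.
have fL : forall i, i < m.+2 -> f i \in L.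
  move=> i hi; rewrite HL /mkseq; apply: map_f; rewrite mem_iota; lia.
have injf : forall i j, i < m.+2 -> j < m.+2 -> f i = f j -> i = j.
  move=> i j hi hj hf; case: (ltngtP i j) => // hij.
  - by move: (INJ i j ltac:(lia)); rewrite hf eqxx.
  - by move: (INJ j i ltac:(lia)); rewrite hf eqxx.
have uL : uniq L.
  rewrite HL /mkseq map_inj_in_uniq ?iota_uniq // => i j; rewrite !mem_iota.
  move=> hi hj; apply: injf; lia.
have fna : forall i, i < m.+2 -> f i != a.
  move=> i hi.
  have [->|i0] := posnP i; first by apply/eqP => ha; rewrite ha eirr in h1.
  have [hm1|hm1] := eqVneq i m.+1; first by subst i; apply/eqP => ha; rewrite ha eirr in h2.
  by case/andP: (h6 i ltac:(lia)).
have aL : a \notin L.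
  apply/negP => /memL[i hi hai]; by move: (fna i hi); rewrite hai eqxx.
set s := a :: L.
have sizeL : size L = m.+2 by rewrite HL size_mkseq.
have idx : forall i, i < m.+2 -> index (f i) s = i.+1.
  move=> i hi; rewrite /s -cat1s index_cat mem_seq1 (negbTE (fna i hi)) add1n.
  by rewrite HL -(nth_mkseq a f hi) index_uniq ?size_mkseq // -HL.
have nexta : next s a = f 0.
  rewrite next_nth mem_head.
  have -> : index a s = 0 by rewrite /s -cat1s index_cat mem_seq1 eqxx /= eqxx.
  by rewrite /s HL nth_mkseq.
have nextf : forall i, i < m.+2 -> next s (f i) = if i < m.+1 then f i.+1 else a.
  move=> i hi; rewrite next_nth (_ : f i \in s); last by rewrite inE fL ?orbT.
  rewrite idx // /s; case: ifP => hi2.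
  - by rewrite HL nth_mkseq.
  - by rewrite nth_default // sizeL; lia.
apply: (@ech s); rewrite /induced_cycle; split.
- by rewrite /s cons_uniq aL uL.
- rewrite /s (_ : size (a :: L) = (size L).+1) // sizeL; lia.
- change (path e a (rcons L a)).
  apply/(pathP a) => i; rewrite size_rcons sizeL => hi.
  case: i hi => [|i] hi.
    by rewrite /= nth_rcons sizeL /= HL nth_mkseq.
  rewrite /= !nth_rcons sizeL.
  have hi' : i < m.+2 by lia.
  rewrite hi' HL nth_mkseq //.
  case: ifP => hi2; first by rewrite nth_mkseq //; apply: h5; lia.
  have -> : i.+1 == m.+2 by apply/eqP; lia.
  have -> : i = m.+1 by lia.
  by rewrite esym.
- move=> x y; rewrite !inE => /orP[/eqP->|/memL[i hi ->]] /orP[/eqP->|/memL[j hj ->]].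
  + by rewrite eirr.
  + move=> hay; rewrite nexta nextf //.
    have [j0|j0] := posnP j; first by subst j; rewrite eqxx.
    have [jm|jm] := eqVneq j m.+1; first by subst j; rewrite ltnn eqxx orbT.
    by case/andP: (h6 j ltac:(lia)); rewrite hay.
  + move=> hay; rewrite esym in hay; rewrite nexta nextf //.
    have [j0|j0] := posnP i; first by subst i; rewrite eqxx orbT.
    have [jm|jm] := eqVneq i m.+1; first by subst i; rewrite ltnn eqxx.
    by case/andP: (h6 i ltac:(lia)); rewrite hay.
  + move=> hfe; rewrite !nextf //.
    case: (ltngtP i j) => hij.
    * have [hj1|hj1] := eqVneq j i.+1; first by subst j; rewrite (_ : i < m.+1) ?eqxx //; lia.
      by move: (CL i j ltac:(lia) ltac:(lia)); rewrite hfe.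
    * have [hj1|hj1] := eqVneq i j.+1; first by subst i; rewrite (_ : j < m.+1) ?eqxx ?orbT //; lia.
      by move: (CL j i ltac:(lia) ltac:(lia)); rewrite esym hfe.
    * by subst j; rewrite eirr in hfe.
Qed.

Definition simp (U : {set V}) v :=
  v \in U /\ forall x y, x \in U -> y \in U -> e v x -> e v y -> x != y -> e x y.

Lemma path_all_in (W : {set V}) x p :
  x \in W -> path [rel u v | e u v && (u \in W) && (v \in W)] x p ->
  all (fun y => y \in W) (x :: p).
Proof.
elim: p x => [|y p IHp] x hx /=; first by rewrite hx.
case/andP => /andP[/andP[_ _] hy] hp.
by rewrite hx /=; have := IHp y hy hp; rewrite /= hy.
Qed.

Lemma simp_away n : forall (U : {set V}), #|U| <= n -> forall a b, a \in U -> b \in U ->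
  b != a -> ~~ e a b -> exists v, [/\ simp U v, v != a & ~~ e a v].
Proof.
elim: n => [|n IHn] U hU a b aU bU ba ab.
  by move: hU; rewrite leqn0 => /eqP /card0_eq /(_ a); rewrite aU.
pose W := [set u in U | (u != a) && ~~ e a u].
pose r := [rel x y | e x y && (x \in W) && (y \in W)].
pose C := [set u | connect r b u].
pose S := [set u in U | (u \notin C) && [exists c in C, e c u]].
pose H := C :|: S.
have bW : b \in W by rewrite inE bU ba ab.
have CW : forall u, u \in C -> u \in W.
  move=> u; rewrite inE => /connectP[p hp ->].
  have := path_all_in bW hp; rewrite /= => /andP[_ hall].
  case: (lastP p) hall => [|q z]; first by rewrite /= bW.
  by rewrite last_rcons all_rcons => /andP[].
have WU : forall u, u \in W -> u \in U by move=> u; rewrite inE => /andP[].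
have Wa : forall u, u \in W -> (u != a) && ~~ e a u by move=> u; rewrite inE => /andP[].
have bC : b \in C by rewrite inE connect0.
have closeC : forall c u, c \in C -> u \in W -> e c u -> u \in C.
  move=> c u hc hu hcu; move: (hc); rewrite !inE => hbc.
  apply: connect_trans hbc (connect1 _); by rewrite /= hcu CW.
have Sa : forall u, u \in S -> e a u.
  move=> u; rewrite inE => /andP[uU /andP[uC /existsP[c /andP[cC cu]]]].
  have [ha|ha] := eqVneq u a.
    subst u; have := Wa c (CW c cC); by rewrite esym cu andbF.
  apply/negPn/negP => hau; move: uC; rewrite (closeC c u cC) //.
  by rewrite inE uU ha hau.
have rsym : symmetric r.
  move=> x y; rewrite /= esym; by rewrite -!andbA [(x \in W) && _]andbC.
have Cconn : forall c1 c2, c1 \in C -> c2 \in C -> connect r c1 c2.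
  move=> c1 c2; rewrite !inE => h1 h2.
  apply: connect_trans h2; by rewrite (sym_connect_sym rsym).
have Sclique : forall u1 u2, u1 \in S -> u2 \in S -> u1 != u2 -> e u1 u2.
  move=> u1 u2 h1 h2 hne; apply/negPn/negP => hn.
  move: (h1) (h2); rewrite !inE => /andP[_ /andP[_ /existsP[c1 /andP[c1C e1]]]].
  move=> /andP[_ /andP[_ /existsP[c2 /andP[c2C e2]]]].
  have /connectP[p hp hl] := Cconn c1 c2 c1C c2C.
  have hall := path_all_in (CW c1 c1C) hp.
  pose f k := if k == 0 then u1 else if k <= (size p).+1 then nth c1 (c1 :: p) k.-1 else u2.
  apply: (no_goodf (m := (size p).+1) (a := a) (f := f)).
  have fm : f (size p).+2 = u2 by rewrite /f /= ltnn.
  have inW : forall k, 0 < k <= (size p).+1 -> f k \in W.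
    move=> k /andP[k0 kp]; rewrite /f (_ : (k == 0) = false); last by case: k k0 {kp}.
    rewrite kp; apply: (allP hall); apply: mem_nth; rewrite /= prednK //.
  split.
  - by rewrite /f /= Sa.
  - by rewrite fm Sa.
  - by rewrite fm /f /=.
  - by rewrite fm /f /=.
  split.
  - move=> i hi; have [->|i0] := posnP i; first by rewrite /f /= esym.
    have [hl2|hl2] := eqVneq i (size p).+1.
      by subst i; rewrite fm /f /= leqnn -(last_nth c1) -hl.
    rewrite /f (_ : (i == 0) = false); last by clear -i0; lia.
    rewrite (_ : i <= (size p).+1); last by clear -hi; lia.
    rewrite (_ : i.+1 <= (size p).+1); last by clear -hi hl2; lia.
    have /(pathP c1) := hp => /(_ i.-1 ltac:(clear -hi hl2 i0; lia)).
    rewrite /= => /andP[/andP[hh _] _].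
    by rewrite (_ : nth c1 (c1 :: p) i = nth c1 p i.-1) // -{1}(prednK i0).
  - move=> i hi; exact: Wa (inW i hi).
have CU : forall u, u \in C -> u \in U by move=> u /CW /WU.
have SU : forall u, u \in S -> u \in U by move=> u; rewrite inE => /andP[].
have SnC : forall u, u \in S -> u \notin C by move=> u; rewrite inE => /and3P[].
have nbrH : forall v x, v \in C -> x \in U -> e v x -> x \in H.
  move=> v x vC xU vx; rewrite inE; case: (boolP (x \in C)) => //= xC.
  by rewrite inE xU xC /=; apply/existsP; exists v; rewrite vC.
have liftS : forall v, v \in C -> simp H v -> simp U v.
  move=> v vC [_ hv]; split; first exact: CU.
  move=> x y xU yU vx vy; apply: hv => //; [exact: nbrH vC xU vx | exact: nbrH vC yU vy].
have HU : forall u, u \in H -> u \in U by move=> u; rewrite inE => /orP[/CU|/SU].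
have aH : a \notin H.
  rewrite inE negb_or; apply/andP; split.
    by apply/negP => /CW /Wa; rewrite eqxx.
  by apply/negP => /Sa; rewrite eirr.
have cardH : #|H| <= n.
  have : #|H| < #|U|.
    apply: proper_card; apply/properP; split; last by exists a.
    by apply/subsetP => u /HU.
  by move=> h; rewrite -ltnS; exact: leq_trans h hU.
have goodC : forall v, v \in C -> simp H v -> exists v, [/\ simp U v, v != a & ~~ e a v].
  move=> v vC hv; exists v; split; first exact: liftS.
  - by case/andP: (Wa v (CW v vC)).
  - by case/andP: (Wa v (CW v vC)).
have [[s0 [c0 [hs0 hc0 hsc]]]|nA] :=
  classic (exists s c, [/\ s \in S, c \in C & ~~ e s c]).
  have sH : s0 \in H by rewrite inE hs0 orbT.
  have cH : c0 \in H by rewrite inE hc0.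
  have cs : c0 != s0 by apply/negP => /eqP hh; move: (SnC s0 hs0); rewrite -hh hc0.
  have [v [[vH hv] vs sv]] := IHn H cardH s0 c0 sH cH cs hsc.
  apply: (goodC v) => //.
  move: vH; rewrite in_setU => /orP[//|vS].
  by move: sv; rewrite Sclique // eq_sym.
have B : forall s c, s \in S -> c \in C -> e s c.
  move=> s c hs hc; apply/negPn/negP => hn; apply: nA; by exists s, c.
have [[x [y [xC yC xy nxy]]]|nB1] :=
  classic (exists x y, [/\ x \in C, y \in C, y != x & ~~ e x y]).
  have xH : x \in H by rewrite inE xC.
  have yH : y \in H by rewrite inE yC.
  have [v [[vH hv] vx xv]] := IHn H cardH x y xH yH xy nxy.
  apply: (goodC v) => //.
  move: vH; rewrite in_setU => /orP[//|vS].
  by move: xv; rewrite esym B.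
have B2 : forall x y, x \in C -> y \in C -> x != y -> e x y.
  move=> x y xC yC hxy; apply/negPn/negP => hn; apply: nB1; exists x, y.
  by split => //; rewrite eq_sym.
exists b; split => //; apply: liftS => //; split; first by rewrite inE bC.
move=> x y; rewrite !in_setU => /orP[xC|xS] /orP[yC|yS] bx b_y hxy.
- exact: B2.
- by rewrite esym B.
- exact: B.
- exact: Sclique.
Qed.

Lemma simp_exists (U : {set V}) : U != set0 -> exists v, simp U v.
Proof.
case/set0Pn => a aU.
have [[x [y [xU [yU [ax ay xy nxy]]]]]|nA] :=
  classic (exists x y, x \in U /\ y \in U /\ [/\ e a x, e a y, x != y & ~~ e x y]).
  have yx : y != x by rewrite eq_sym.
  have [v [hv _ _]] := simp_away (leqnn #|U|) xU yU yx nxy.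
  by exists v.
exists a; split => // x y xU yU ax ay xy; apply/negPn/negP => hn; apply: nA.
by exists x, y.
Qed.

Definition peo (s : seq V) := forall v u1 u2, u1 \in s -> u2 \in s -> e v u1 -> e v u2 ->
  index v s < index u1 s -> index v s < index u2 s -> u1 != u2 -> e u1 u2.

Lemma peo_exists n : forall U : {set V}, #|U| <= n ->
  exists s, [/\ uniq s, (forall x, (x \in s) = (x \in U)) & peo s].
Proof.
elim: n => [|n IHn] U hU.
  exists [::]; split => //.
  - move=> x; move: hU; rewrite leqn0 => /eqP /card0_eq /(_ x) ->; by [].
have [->|U0] := eqVneq U set0.
  by exists [::]; split => // x; rewrite inE.
have [v [vU hv]] := simp_exists U0.
have hU' : #|U :\ v| <= n.
  move: hU; rewrite (cardsD1 v U) vU add1n ltnS //.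
have [s' [us' ms' ps']] := IHn _ hU'.
exists (v :: s'); split.
- by rewrite cons_uniq ms' in_setD1 eqxx us'.
- move=> x; rewrite inE ms' in_setD1; case: eqVneq => [->|] //=.
- move=> x u1 u2; rewrite !inE !ms' !in_setD1 /=.
  have idxv : forall y, y != v -> index y (v :: s') = (index y s').+1.
    by move=> y hy; rewrite /= eq_sym (negbTE hy).
  have [->|xv] := eqVneq x v.
    rewrite /= ?eqxx.
    move=> /orP[/eqP->|/andP[u1v u1U]]; first by move=> _; rewrite eirr.
    move=> /orP[/eqP->|/andP[u2v u2U]]; first by move=> _; rewrite eirr.
    move=> e1 e2 _ _; exact: hv.
  move=> /orP[/eqP->|/andP[u1v u1U]]; first by move=> _ _ _; rewrite eqxx.
  move=> /orP[/eqP->|/andP[u2v u2U]]; first by move=> _ _ _; rewrite eqxx.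
  rewrite ![v == _]eq_sym (negbTE u1v) (negbTE u2v) !ltnS => e1 e2 i1 i2 hne.
  apply: (ps' x) => //; by rewrite ms' in_setD1 ?u1v ?u2v.
Qed.
End Chordal.


Section Dist.
Variable V : finType.
Variable e : rel V.
Hypothesis econn : connected_graph e.

Lemma walknP n x y : walkn e n x y <-> exists p : seq V, [/\ size p = n, path e x p & last x p = y].
Proof.
split.
- case/existsP => p /andP[hp /eqP hl]; exists (val p); split => //; exact: size_tuple.
- case=> p [hs hp hl]; subst n; apply/existsP; exists (in_tuple p).
  by rewrite /= hp hl eqxx.
Qed.

Lemma walk_exists x y : exists2 n, n < #|V| & walkn e n x y.
Proof.
have /connectP[p hp hl] := econn x y.
move: hl; case: (shortenP hp) => p' hp' up' _ hl.
exists (size p'); last by apply/walknP; exists p'.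
have := max_card (mem (x :: p')); rewrite (card_uniqP up') /=; by [].
Qed.

Lemma dist_spec x y : dist e x y < #|V| /\ walkn e (dist e x y) x y.
Proof.
have [n hn hw] := walk_exists x y.
have hh : has (fun n => walkn e n x y) (iota 0 #|V|).
  by apply/hasP; exists n => //; rewrite mem_iota.
split; first by move: hh; rewrite has_find size_iota.
have := nth_find 0 hh; rewrite nth_iota ?add0n //.
by move: hh; rewrite has_find size_iota.
Qed.

Lemma dist_min n x y : walkn e n x y -> n < #|V| -> dist e x y <= n.
Proof.
move=> hw hn; rewrite leqNgt; apply/negP => hlt.
have := before_find 0 hlt; rewrite nth_iota // add0n hw; by [].
Qed.

Lemma dist_adj x u v : e u v -> dist e x v <= (dist e x u).+1.
Proof.
move=> huv; have [h1 /walknP[p [hs hp hl]]] := dist_spec x u.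
have [h2 _] := dist_spec x v.
have [hlt|hge] := ltnP (dist e x u).+1 #|V|; last by apply: leq_trans (ltnW h2) hge.
apply: dist_min hlt; apply/walknP; exists (rcons p v); split.
- by rewrite size_rcons hs.
- by rewrite rcons_path hp hl.
- by rewrite last_rcons.
Qed.

Lemma clique_card (esym : symmetric e) (K R : {set V}) : resolving e R ->
  (forall u v, u \in K -> v \in K -> u != v -> e u v) -> #|K| <= 2 ^ #|R|.
Proof.
move=> hR hK.
pose phi u := [set x in R | [exists v in K, dist e x v < dist e x u]].
have hadj : forall x u v, u \in K -> v \in K -> dist e x v <= (dist e x u).+1.
  move=> x u v uK vK; have [->|uv] := eqVneq u v; first exact: leqnSn.
  exact: dist_adj (hK _ _ uK vK uv).
have inj : {in K &, injective phi}.
  move=> u v uK vK hphi; apply/eqP/negPn/negP => uv.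
  have [x xR hx] := hR u v uv.
  wlog hlt : u v uK vK hphi uv hx / dist e x u < dist e x v.
    move=> W; case: (ltngtP (dist e x u) (dist e x v)) => h.
    - exact: (W u v).
    - apply: (W v u) => //; by rewrite eq_sym.
    - by rewrite h eqxx in hx.
  have : x \in phi v by rewrite inE xR; apply/existsP; exists u; rewrite uK hlt.
  rewrite -hphi inE xR /= => /existsP[w /andP[wK hw]].
  have := hadj x w v wK vK; lia.
rewrite -(card_in_imset inj) -card_powerset; apply: subset_leq_card.
apply/subsetP => _ /imsetP[u _ ->]; rewrite powersetE; apply/subsetP => x.
by rewrite inE => /andP[].
Qed.
End Dist.


Lemma prev_neq_next (T : eqType) (s : seq T) x :
  uniq s -> 3 <= size s -> x \in s -> prev s x != next s x.
Proof.
move=> us hs xs; apply/negP => /eqP hpn.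
have hnn : next s (next s x) = x by rewrite -{1}hpn next_prev.
case: (rot_to xs) => i p0 hrot.
have us2 : uniq (x :: p0) by rewrite -hrot rot_uniq.
have hs2 : 3 <= size (x :: p0) by rewrite -hrot size_rot.
have hn2 : forall y, next (x :: p0) y = next s y by move=> y; rewrite -hrot next_rot.
move: hnn; rewrite -!hn2.
case: p0 us2 hs2 {hrot hn2} => [|y [|z r]] //= us2 _.
move: us2; rewrite !inE !negb_or => /andP[/andP[xy /andP[xz _]] /andP[/andP[yz _] _]].
rewrite eqxx /= eq_sym (negbTE xy) eqxx => h.
by move: xz; rewrite h eqxx.
Qed.

Definition ptree n (par : nat -> nat) : rel 'I_n.+1 :=
  [rel a b : 'I_n.+1 | ((a < b) && (par a == b)) || ((b < a) && (par b == a))].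
Arguments ptree : clear implicits.

Lemma ptree_sym n par : symmetric (ptree n par).
Proof. by move=> a b; rewrite /ptree /= orbC. Qed.

Lemma ptree_is_tree n par : (forall i, i < n -> i < par i <= n) -> is_tree (ptree n par).
Proof.
move=> hpar; split.
- split; first exact: ptree_sym.
  by move=> a; rewrite /ptree /= ltnn.
- have toMax : forall i : 'I_n.+1, connect (ptree n par) i ord_max.
    move=> i; have [M] := ubnP (n - i); elim: M i => // M IHM i hM.
    have [hin|hin] := ltnP i n.
      have hp := hpar i hin.
      have hpn : par i < n.+1 by case/andP: hp => _ h; rewrite ltnS.
      apply: connect_trans (connect1 _) (IHM (Ordinal hpn) _).
        by rewrite /ptree /= (proj1 (andP hp)) eqxx.
      by rewrite /ptree /=; clear -hp hM hin; lia.
    have -> : i = ord_max by apply/val_inj; rewrite /ptree /=; clear -hin; have := ltn_ord i; lia.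
    exact: connect0.
  move=> x y; apply: connect_trans (toMax x) _.
  by rewrite (sym_connect_sym (@ptree_sym n par)).
- move=> s [us hs hc].
  case: s us hs hc => [//|x0 s1] us hs hc.
  have hx0 : x0 \in x0 :: s1 by rewrite mem_head.
  case: (arg_minnP (fun i : 'I_n.+1 => val i) hx0) => m mS mmin.
  have hp := prev_cycle hc mS; have hq := next_cycle hc mS.
  have pS : prev (x0 :: s1) m \in x0 :: s1 by rewrite mem_prev.
  have qS : next (x0 :: s1) m \in x0 :: s1 by rewrite mem_next.
  have h1 := mmin _ pS; have h2 := mmin _ qS.
  have key : forall p q : 'I_n.+1, m <= p -> m <= q -> ptree n par p m -> ptree n par m q -> p = q.
    move=> p q l1 l2; rewrite /ptree /= (leq_gtF l1) (leq_gtF l2) /= ?orbF.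
    move=> /andP[_ /eqP e1] /andP[_ /eqP e2]; apply/val_inj; by rewrite /= -e1 -e2.
  have := key _ _ h1 h2 hp hq.
  by move/eqP; rewrite (negbTE (prev_neq_next us hs mS)).
Qed.

Section Final.
Variable V : finType.
Variable e : rel V.
Hypothesis esym : symmetric e.
Hypothesis eirr : irreflexive e.
Hypothesis ech : chordal e.
Hypothesis econn : connected_graph e.
Variable R : {set V}.
Hypothesis hR : resolving e R.

Lemma td_bound : has_td_width e (3 ^ #|R|).
Proof.
have [s [us ms ps]] := peo_exists esym eirr ech (leqnn #|[set: V]|).
have ms' : forall x, x \in s by move=> x; rewrite ms inE.
have h23 : 2 ^ #|R| <= (3 ^ #|R|).+1.
  apply: leq_trans (leqnSn _); case: #|R| => [//|k]; by rewrite leq_exp2r.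
case: s us ms ms' ps => [|v0 s1] us _ ms ps.
  exists 0, (ptree 0 id), (fun _ => set0); split; last first.
    by apply/bigmax_leqP => i _; rewrite cards0.
  split.
  - by apply: ptree_is_tree.
  - by move=> v; move: (ms v).
  - by move=> u v _; move: (ms u).
  - by move=> v i j; rewrite inE.
set s := v0 :: s1.
set n := size s1.
pose vert i := nth v0 s i.
pose P i := fun j => (i < j) && e (vert i) (vert j).
pose par i := minn n (find (P i) (iota 0 n.+1)).
pose B (i : 'I_n.+1) := [set u | (u == vert i) || (e (vert i) u && (i < index u s))].
have sz : size s = n.+1 by [].
have idxv : forall i, i < n.+1 -> index (vert i) s = i.
  by move=> i hi; rewrite /vert index_uniq.
have vidx : forall u, vert (index u s) = u by move=> u; rewrite /vert nth_index.
have idxlt : forall u, index u s < n.+1 by move=> u; rewrite -sz index_mem.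
have vin : forall i, vert i \in s by move=> i; exact: ms.
have parF : forall i, has (P i) (iota 0 n.+1) -> par i = find (P i) (iota 0 n.+1) /\ P i (par i).
  move=> i hh; have hf := hh; rewrite has_find size_iota in hf.
  have -> : par i = find (P i) (iota 0 n.+1) by apply/minn_idPr; rewrite -ltnS.
  split => //; have := nth_find 0 hh; by rewrite nth_iota.
have hpar : forall i, i < n -> i < par i <= n.
  move=> i hi; rewrite geq_minl andbT.
  case: (boolP (has (P i) (iota 0 n.+1))) => hh.
    by have [_ /andP[]] := parF i hh.
  have hf : n.+1 <= find (P i) (iota 0 n.+1).
    by move: hh; rewrite has_find size_iota -leqNgt.
  rewrite /par (minn_idPl _) //; exact: ltnW.
have parle : forall i j, j < n.+1 -> i < j -> e (vert i) (vert j) -> par i <= j.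
  move=> i j hj hij hv; apply: leq_trans (geq_minr _ _) _.
  rewrite leqNgt; apply/negP => hlt.
  have := before_find 0 hlt; rewrite nth_iota // add0n /P hij hv; by [].
have parP : forall i j, j < n.+1 -> i < j -> e (vert i) (vert j) ->
    i < par i /\ e (vert i) (vert (par i)).
  move=> i j hj hij hv.
  have hh : has (P i) (iota 0 n.+1) by apply/hasP; exists j; rewrite ?mem_iota //= /P hij hv.
  by have [_ /andP[]] := parF i hh.
have ptreeT : forall (i : 'I_n.+1) (j : 'I_n.+1), i < j -> par i = j -> ptree n par i j.
  by move=> i j hij hp; rewrite /ptree /= hij hp eqxx.
exists n, (ptree n par), B; split; last first.
  apply/bigmax_leqP => i _; apply: leq_trans h23.
  apply: (clique_card econn esym hR) => x y; rewrite !inE.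
  move=> /orP[/eqP->|/andP[ex ix]] /orP[/eqP->|/andP[ey iy]] hxy.
  - by rewrite eqxx in hxy.
  - exact: ey.
  - by rewrite esym.
  - apply: (ps (vert i)) => //; by rewrite idxv.
split.
- apply: ptree_is_tree; exact: hpar.
- move=> v; exists (Ordinal (idxlt v)); by rewrite inE /= vidx eqxx.
- move=> u v huv.
  have key : forall u v, e u v -> index u s < index v s -> exists i : 'I_n.+1, (u \in B i) && (v \in B i).
    move=> x y hxy hlt; exists (Ordinal (idxlt x)); rewrite !inE /= vidx eqxx /= hxy hlt.
    by rewrite orbT.
  case: (ltngtP (index u s) (index v s)) => h.
  + exact: key.
  + have hvu : e v u by rewrite esym.
    have [i hi] := key v u hvu h; exists i; by rewrite andbC.
  + by move: huv; rewrite -(vidx u) h vidx eirr.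
- move=> v.
  pose tv := [rel a b | ptree n par a b && (v \in B a) && (v \in B b)].
  have tvsym : symmetric tv.
    move=> a b; rewrite /= ptree_sym; by rewrite -!andbA [(v \in B a) && _]andbC.
  have toV : forall i : 'I_n.+1, v \in B i -> connect tv i (Ordinal (idxlt v)).
    move=> i; have [M] := ubnP (index v s - i); elim: M i => // M IHM i hM vi.
    move: (vi); rewrite inE => /orP[/eqP hv|/andP[ev iv]].
      have -> : i = Ordinal (idxlt v) by apply/val_inj; change (val i = index v s); rewrite hv idxv.
      exact: connect0.
    have ev' : e (vert i) (vert (index v s)) by rewrite vidx.
    have [ip ep] := parP i _ (idxlt v) iv ev'.
    have pl := parle i _ (idxlt v) iv ev'.
    have pn : par i < n.+1 by apply: leq_ltn_trans pl (idxlt v).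
    pose J := Ordinal pn.
    have vJ : v \in B J.
      rewrite inE /=; have [pe|pe] := eqVneq (par i) (index v s).
        by rewrite /vert pe -/(vert _) vidx eqxx.
      apply/orP; right.
      have plt : par i < index v s by rewrite ltn_neqAle pe pl.
      rewrite plt andbT.
      apply: (ps (vert i)) => //.
      + by rewrite idxv // idxv.
      + by rewrite idxv.
      + apply/negP => /eqP hvv; move: pe; by rewrite -hvv idxv ?eqxx.
    apply: connect_trans (connect1 _) (IHM J _ vJ).
      by rewrite /= vi vJ andbT ptreeT.
    change (index v s - par i < M); clear -ip hM iv pl; lia.
  move=> i j vi vj; apply: connect_trans (toV i vi) _.
  by rewrite (sym_connect_sym tvsym) toV.
Qed.
End Final.

Theorem mainTheorem4 (V : finType) (e : rel V) (w k : nat) (R : {set V}) :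
  simple_graph e -> connected_graph e -> chordal e ->
  treewidth e w -> resolving e R -> #|R| = k ->
  w <= 3 ^ k.
Proof.
move=> [esym eirr] econn ech [_ hmin] hR hk; subst k; apply: hmin.
exact: td_bound.
Qed.
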